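(* For a semigroup $X$ the following conditions are equivalent: (1) $\upsilon(X)$ is a finite semilattice; (2) $\upsilon(X)$ is an inverse semigroup; (3) the idempotents of the semigroup $\upsilon(X)$ commute, and $\upsilon(X)$ is sub-Clifford or regular; (4) $X$ is a finite linear semilattice, isomorphic to $L_n$ for some $n\in\omega$.
   Context: An upfamily on a set $X$ is a family $\mathcal F$ of nonempty subsets of $X$ such that $F\in\mathcal F$ and $F\subset E\subset X$ imply $E\in\mathcal F$; $\upsilon(X)$ is the set of all upfamilies on $X$. Each $x\in X$ is identified with $\langle x\rangle=\{A\subset X: x\in A\}$. For a family $\mathcal C$ of nonempty subsets, $\langle\mathcal C\rangle=\{A\subset X:\exists C\in\mathcal C,\ C\subset A\}$. For a semigroup $(X,* )$ the operation is extended to $\upsilon(X)$ by $\mathcal A*\mathcal B=\big\langle \bigcup_{a\in A} a*B_a : A\in\mathcal A,\ \{B_a\}_{a\in A}\subset\mathcal B\big\rangle$. A semilattice is a set with an associative, commutative, idempotent operation; a semigroup is linear if $xy\in\{x,y\}$ for all $x,y$. A semigroup $S$ is inverse if each $x$ has a unique $x^{-1}$ with $xx^{-1}x=x$, $x^{-1}xx^{-1}=x^{-1}$; regular if $x\in xSx$ for all $x$; sub-Clifford if it is a union of cancellative subsemigroups. $L_n=\{0,\dots,n-1\}$ with the operation $\min$ ($L_0=\emptyset$). *)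

(* Defs.v *)
From Stdlib Require Import Arith List.

Set Implicit Arguments.

Definition upfamily (X : Type) (F : (X -> Prop) -> Prop) : Prop :=
  (forall A, F A -> exists x, A x) /\
  (forall A B, F A -> (forall x, A x -> B x) -> F B).

Record upfam (X : Type) := Upfam {
  fam : (X -> Prop) -> Prop;
  fam_up : upfamily fam }.

(* A * B = < { U_{a in A} a * B_a : A in F, {B_a}_{a in A} subset G } > *)
Definition ext_mul (X : Type) (op : X -> X -> X)
    (F G : (X -> Prop) -> Prop) : (X -> Prop) -> Prop :=
  fun S => exists (A : X -> Prop) (Bf : X -> X -> Prop),
    F A /\ (forall a, A a -> G (Bf a)) /\
    (forall a b, A a -> Bf a b -> S (op a b)).

Lemma ext_mul_up (X : Type) (op : X -> X -> X) (F G : upfam X) :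
  upfamily (ext_mul op (fam F) (fam G)).
Proof.
  destruct F as [F [HF1 HF2]], G as [G [HG1 HG2]]; simpl.
  split.
  - intros S [A [Bf [HA [HB HS]]]].
    destruct (HF1 A HA) as [a Ha].
    destruct (HG1 (Bf a) (HB a Ha)) as [b Hb].
    exists (op a b). exact (HS a b Ha Hb).
  - intros S T [A [Bf [HA [HB HS]]]] HST.
    exists A, Bf. repeat split; auto.
Qed.

Definition umul (X : Type) (op : X -> X -> X) (F G : upfam X) : upfam X :=
  Upfam (ext_mul_up op F G).

Definition associative_op (T : Type) (m : T -> T -> T) : Prop :=
  forall x y z, m x (m y z) = m (m x y) z.

Definition finite_type (T : Type) : Prop :=
  exists l : list T, forall x, In x l.

Definition is_semilattice (T : Type) (m : T -> T -> T) : Prop :=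
  associative_op m /\ (forall x y, m x y = m y x) /\ (forall x, m x x = x).

Definition is_inverse_semigroup (T : Type) (m : T -> T -> T) : Prop :=
  associative_op m /\
  forall x, exists! y, m (m x y) x = x /\ m (m y x) y = y.

Definition idempotents_commute (T : Type) (m : T -> T -> T) : Prop :=
  forall e f, m e e = e -> m f f = f -> m e f = m f e.

Definition is_regular (T : Type) (m : T -> T -> T) : Prop :=
  forall x, exists y, m (m x y) x = x.

Definition cancellative_subsemigroup (T : Type) (m : T -> T -> T)
    (S : T -> Prop) : Prop :=
  (forall a b, S a -> S b -> S (m a b)) /\
  (forall a b c, S a -> S b -> S c -> m a b = m a c -> b = c) /\
  (forall a b c, S a -> S b -> S c -> m b a = m c a -> b = c).

(* sub-Clifford: a union of cancellative subsemigroups, i.e. every element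
   lies in some cancellative subsemigroup *)
Definition is_subClifford (T : Type) (m : T -> T -> T) : Prop :=
  forall x, exists S : T -> Prop, S x /\ cancellative_subsemigroup m S.

(* (X, op) is isomorphic to L_n = ({0,...,n-1}, min) *)
Definition iso_L (X : Type) (op : X -> X -> X) (n : nat) : Prop :=
  exists f : X -> nat,
    (forall x, f x < n) /\
    (forall x y, f x = f y -> x = y) /\
    (forall k, k < n -> exists x, f x = k) /\
    (forall x y, f (op x y) = Nat.min (f x) (f y)).

(* Main.v *)
Require Import Defs.
From Stdlib Require Import Arith List Lia Classical ClassicalEpsilon
  FunctionalExtensionality PropExtensionality ProofIrrelevance FinFun.
Set Implicit Arguments.

Lemma upfam_ext (X : Type) (F G : upfam X) :
  (forall S, fam F S <-> fam G S) -> F = G.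
Proof.
  destruct F as [f pf], G as [g pg]; simpl; intro H.
  assert (f = g) by (extensionality S; apply propositional_extensionality; apply H).
  subst g. f_equal. apply proof_irrelevance.
Qed.

Lemma up_ne (X : Type) (F : upfam X) S : fam F S -> exists x, S x.
Proof. destruct F as [f [h1 h2]]; simpl; apply h1. Qed.

Lemma up_mono (X : Type) (F : upfam X) (S T : X -> Prop) :
  fam F S -> (forall x, S x -> T x) -> fam F T.
Proof. destruct F as [f [h1 h2]]; simpl; apply h2. Qed.

Lemma up_iff (X : Type) (F : upfam X) (S T : X -> Prop) :
  (forall x, S x <-> T x) -> (fam F S <-> fam F T).
Proof. intro H; split; intro; eapply up_mono; eauto; firstorder. Qed.

Lemma umul_char (X : Type) (op : X -> X -> X) (F G : upfam X) S :
  fam (umul op F G) S <-> fam F (fun a => fam G (fun b => S (op a b))).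
Proof.
  simpl; unfold ext_mul; split.
  - intros [A [Bf [HA [HB HS]]]]. eapply up_mono; [exact HA|].
    intros a Ha. eapply up_mono; [exact (HB a Ha)|]. intros b Hb. auto.
  - intro H. exists (fun a => fam G (fun b => S (op a b))), (fun a b => S (op a b)).
    repeat split; auto.
Qed.

Lemma umul_assoc (X : Type) (op : X -> X -> X)
  (Hassoc : forall x y z, op x (op y z) = op (op x y) z) :
  associative_op (umul op).
Proof.
  intros F G H. apply upfam_ext; intro S.
  rewrite (umul_char op F (umul op G H)), (umul_char op (umul op F G) H),
    (umul_char op F G).
  apply up_iff; intro a. rewrite umul_char.
  apply up_iff; intro b. apply up_iff; intro c.
  rewrite Hassoc; tauto.
Qed.

Lemma inv_unique (T : Type) (m : T -> T -> T) :
  is_inverse_semigroup m -> forall a y z, m (m a y) a = a -> m (m y a) y = y ->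
                 m (m a z) a = a -> m (m z a) z = z -> y = z.
Proof.
  intros [Ha Hinv] a y z H1 H2 H3 H4. destruct (Hinv a) as [w [_ Hw]].
  rewrite <- (Hw y) by auto. apply Hw; auto.
Qed.

Lemma inv_idem_prod (T : Type) (m : T -> T -> T) :
  is_inverse_semigroup m -> forall a b, m a a = a -> m b b = b ->
  m (m a b) (m a b) = m a b.
Proof.
  intros HI a b HA HB. pose proof HI as [Ha Hinv].
  assert (IA : forall R, m a (m a R) = m a R) by (intro R; rewrite Ha, HA; auto).
  assert (IB : forall R, m b (m b R) = m b R) by (intro R; rewrite Ha, HB; auto).
  destruct (Hinv (m a b)) as [x [[Hx1 Hx2] _]].
  assert (N1 : m a (m b (m x (m a b))) = m a b).
  { pose proof Hx1 as H. repeat rewrite <- Ha in H. exact H. }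
  assert (N2 : m x (m a (m b (m x a))) = m x a).
  { pose proof (f_equal (fun t => m t a) Hx2) as H. simpl in H.
    repeat rewrite <- Ha in H. exact H. }
  set (y := m (m b x) a).
  assert (G1 : m (m (m a b) y) (m a b) = m a b).
  { unfold y. repeat rewrite <- Ha. rewrite IB, IA. exact N1. }
  assert (G2 : m (m y (m a b)) y = y).
  { unfold y. repeat rewrite <- Ha. rewrite IA, IB, N2. reflexivity. }
  assert (Gyy : m y y = y).
  { unfold y. repeat rewrite <- Ha. rewrite N2. reflexivity. }
  assert (Exy : y = x) by (eapply inv_unique; eauto).
  assert (Hxx : m x x = x) by (rewrite <- Exy; exact Gyy).
  assert (Exab : x = m a b).
  { eapply inv_unique with (a := x); eauto; rewrite ?Hxx; auto. }
  rewrite <- Exab. exact Hxx.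
Qed.

Lemma inverse_idem_comm (T : Type) (m : T -> T -> T) :
  is_inverse_semigroup m -> idempotents_commute m.
Proof.
  intros HI e f He Hf. pose proof HI as [Ha Hinv].
  pose proof (inv_idem_prod HI He Hf) as Ief.
  pose proof (inv_idem_prod HI Hf He) as Ife.
  assert (IE : forall R, m e (m e R) = m e R) by (intro R; rewrite Ha, He; auto).
  assert (IF : forall R, m f (m f R) = m f R) by (intro R; rewrite Ha, Hf; auto).
  assert (N1 : m e (m f (m e f)) = m e f) by (pose proof Ief as H; repeat rewrite <- Ha in H; exact H).
  assert (N2 : m f (m e (m f e)) = m f e) by (pose proof Ife as H; repeat rewrite <- Ha in H; exact H).
  symmetry. eapply inv_unique with (a := m e f); [exact HI|..].
  - repeat rewrite <- Ha. rewrite IF, IE. exact N1.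
  - repeat rewrite <- Ha. rewrite IE, IF. exact N2.
  - rewrite !Ief; auto.
  - rewrite !Ief; auto.
Qed.

Lemma pr1_up (X:Type) (x:X) : upfamily (fun S : X -> Prop => S x).
Proof. split; [intros A H; exists x; exact H | intros A B H1 H2; auto]. Qed.
Definition pr1 (X:Type) (x:X) : upfam X := Upfam (pr1_up x).

Lemma pr1_mul (X:Type) (op:X->X->X) x y : umul op (pr1 x) (pr1 y) = pr1 (op x y).
Proof. apply upfam_ext; intro S; rewrite umul_char; simpl; tauto. Qed.

Lemma pr1_inj (X:Type) (x y : X) : pr1 x = pr1 y -> x = y.
Proof.
  intro H. assert (A : fam (pr1 x) (fun z => z = x)) by (simpl; auto).
  rewrite H in A. simpl in A. auto.
Qed.

Lemma prA2_up (X:Type) (e f:X) : upfamily (fun S : X -> Prop => S e /\ S f).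
Proof. split; [intros A [H _]; exists e; exact H | intros A B [H1 H2] H3; auto]. Qed.
Definition prA2 (X:Type) (e f:X) : upfam X := Upfam (prA2_up e f).

Lemma Fr_up (X:Type) (s : nat -> X) :
  upfamily (fun S : X -> Prop => exists k, forall n, k <= n -> S (s n)).
Proof. split.
  - intros A [k H]. exists (s k). apply H; lia.
  - intros A B [k H] H2. exists k; auto.
Qed.
Definition Fr (X:Type) (s:nat->X) : upfam X := Upfam (Fr_up s).

Lemma Inf_up (X:Type) (s : nat -> X) :
  upfamily (fun S : X -> Prop => forall k, exists n, k <= n /\ S (s n)).
Proof. split.
  - intros A H. destruct (H 0) as [n [_ Hn]]. eauto.
  - intros A B H H2 k. destruct (H k) as [n [? ?]]; eauto.
Qed.
Definition Inf (X:Type) (s:nat->X) : upfam X := Upfam (Inf_up s).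

Definition caseA (X:Type) (op:X->X->X) (s:nat->X) :=
  forall n, exists c t, forall m, t <= m -> op (s n) (s m) = s (m + c).
Definition caseB (X:Type) (op:X->X->X) (s:nat->X) :=
  forall n, exists t, forall m, t <= m -> op (s n) (s m) = s n.

Lemma FrInf_eq (X:Type) (op:X->X->X) (s:nat->X) :
  idempotents_commute (umul op) -> caseA op s \/ caseB op s ->
  forall S, fam (Inf s) S <-> fam (Fr s) S.
Proof.
  intros HI [HA|HB].
  - assert (I1 : forall n S, fam (Inf s) (fun b => S (op (s n) b)) <-> fam (Inf s) S).
    { intros n S. destruct (HA n) as [c [t Ht]]. simpl. split.
      - intros H k. destruct (H (k + t)) as [m [Hm HS]]. rewrite Ht in HS by lia.
        exists (m + c); split; [lia|auto].
      - intros H k. destruct (H (k + t + c)) as [p [Hp HS]].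
        exists (p - c). split; [lia|]. rewrite Ht by lia.
        replace (p - c + c) with p by lia. auto. }
    assert (F1 : forall n S, fam (Fr s) (fun b => S (op (s n) b)) <-> fam (Fr s) S).
    { intros n S. destruct (HA n) as [c [t Ht]]. simpl. split.
      - intros [k H]. exists (k + t + c). intros p Hp.
        specialize (H (p - c) ltac:(lia)). rewrite Ht in H by lia.
        replace (p - c + c) with p in H by lia. auto.
      - intros [k H]. exists (k + t). intros m Hm. rewrite Ht by lia. apply H; lia. }
    assert (E1 : umul op (Fr s) (Inf s) = Inf s).
    { apply upfam_ext; intro S. rewrite umul_char.
      split.
      - intros [k H]. apply (I1 k). apply H; lia.
      - intros H. exists 0. intros n _. apply (I1 n). exact H. }
    assert (E2 : umul op (Inf s) (Fr s) = Fr s).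
    { apply upfam_ext; intro S. rewrite umul_char.
      split.
      - intros H. destruct (H 0) as [n [_ Hn]]. apply (F1 n). exact Hn.
      - intros H k. exists k; split; auto. apply (F1 k). exact H. }
    assert (E3 : umul op (Fr s) (Fr s) = Fr s).
    { apply upfam_ext; intro S. rewrite umul_char.
      split.
      - intros [k H]. apply (F1 k). apply H; lia.
      - intros H. exists 0. intros n _. apply (F1 n). exact H. }
    assert (E4 : umul op (Inf s) (Inf s) = Inf s).
    { apply upfam_ext; intro S. rewrite umul_char.
      split.
      - intros H. destruct (H 0) as [n [_ Hn]]. apply (I1 n). exact Hn.
      - intros H k. exists k; split; auto. apply (I1 k). exact H. }
    pose proof (HI _ _ E3 E4) as C. rewrite E1, E2 in C. rewrite C. tauto.
  - assert (I1 : forall n S, fam (Inf s) (fun b => S (op (s n) b)) <-> S (s n)).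
    { intros n S. destruct (HB n) as [t Ht]. simpl. split.
      - intros H. destruct (H t) as [m [Hm HS]]. rewrite Ht in HS by lia. auto.
      - intros H k. exists (k + t). split; [lia|]. rewrite Ht by lia. auto. }
    assert (F1 : forall n S, fam (Fr s) (fun b => S (op (s n) b)) <-> S (s n)).
    { intros n S. destruct (HB n) as [t Ht]. simpl. split.
      - intros [k H]. specialize (H (k + t) ltac:(lia)). rewrite Ht in H by lia. auto.
      - intros H. exists t. intros m Hm. rewrite Ht by lia. auto. }
    assert (E1 : umul op (Fr s) (Inf s) = Fr s).
    { apply upfam_ext; intro S. rewrite umul_char.
      split; intros [k H]; exists k; intros n Hn; apply (I1 n); auto. }
    assert (E2 : umul op (Inf s) (Fr s) = Inf s).
    { apply upfam_ext; intro S. rewrite umul_char.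
      split; intros H k; destruct (H k) as [n [? Hn]]; exists n; split; auto; apply (F1 n); auto. }
    assert (E3 : umul op (Fr s) (Fr s) = Fr s).
    { apply upfam_ext; intro S. rewrite umul_char.
      split; intros [k H]; exists k; intros n Hn; apply (F1 n); auto. }
    assert (E4 : umul op (Inf s) (Inf s) = Inf s).
    { apply upfam_ext; intro S. rewrite umul_char.
      split; intros H k; destruct (H k) as [n [? Hn]]; exists n; split; auto; apply (I1 n); auto. }
    pose proof (HI _ _ E3 E4) as C. rewrite E1, E2 in C. rewrite C. tauto.
Qed.

Lemma Inf_neq (X:Type) (s:nat->X) :
  (forall n m, n < m -> s n <> s m) -> (forall S, fam (Inf s) S <-> fam (Fr s) S) -> False.
Proof.
  intros Hinj H.
  set (S := fun z => exists q, z = s (2 * q)).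
  assert (A : fam (Inf s) S).
  { simpl. intro k. exists (2 * k). split; [lia|]. exists k; auto. }
  apply H in A. simpl in A. destruct A as [k Hk].
  destruct (Hk (2 * k + 1) ltac:(lia)) as [q Hq].
  destruct (Nat.lt_ge_cases (2*k+1) (2*q)) as [L|L].
  - exact (Hinj _ _ L Hq).
  - assert (L' : 2 * q < 2 * k + 1) by lia. exact (Hinj _ _ L' (eq_sym Hq)).
Qed.

Fixpoint pw (X:Type) (op:X->X->X) (x:X) (n:nat) : X :=
  match n with 0 => x | S n => op (pw op x n) x end.

Lemma pw_add (X:Type) (op:X->X->X)
  (Ha : forall x y z, op x (op y z) = op (op x y) z) x n m :
  op (pw op x n) (pw op x m) = pw op x (n + m + 1).
Proof.
  induction m as [|m IH].
  - simpl. replace (n + 0 + 1) with (S n) by lia. reflexivity.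
  - simpl. rewrite Ha, IH. replace (n + S m + 1) with (S (n + m + 1)) by lia. reflexivity.
Qed.

Lemma pw_S_l (X:Type) (op:X->X->X)
  (Ha : forall x y z, op x (op y z) = op (op x y) z) x k :
  op x (pw op x k) = pw op x (S k).
Proof.
  pose proof (pw_add _ Ha x 0 k) as T. change (pw op x 0) with x in T.
  rewrite T. f_equal; lia.
Qed.

Lemma idem_X_comm (X:Type) (op:X->X->X) :
  idempotents_commute (umul op) ->
  forall e f, op e e = e -> op f f = f -> op e f = op f e.
Proof.
  intros HI e f He Hf. apply pr1_inj. rewrite <- !pr1_mul. apply HI;
  rewrite pr1_mul; congruence.
Qed.

Lemma pow_eventual (X:Type) (op:X->X->X)
  (Ha : forall x y z, op x (op y z) = op (op x y) z) :
  idempotents_commute (umul op) -> forall x, exists m, pw op x m = pw op x (S m).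
Proof.
  intros HI x.
  assert (CA : caseA op (pw op x)).
  { intro n. exists (S n), 0. intros m _. rewrite pw_add by auto. f_equal; lia. }
  pose proof (FrInf_eq HI (or_introl CA)) as EQ.
  destruct (classic (exists i j, i < j /\ pw op x i = pw op x j)) as [[i [j [Hij E]]]|NP].
  2:{ exfalso. apply (Inf_neq (s := pw op x)); auto.
      intros n m Hnm E. apply NP; eauto. }
  set (d := j - i).
  assert (P1 : forall r, pw op x (i + r) = pw op x (j + r)).
  { induction r as [|r IH]. - rewrite !Nat.add_0_r; auto.
    - replace (i + S r) with (S (i + r)) by lia. replace (j + S r) with (S (j + r)) by lia.
      simpl. rewrite IH; auto. }
  assert (P2 : forall c p, i <= p -> pw op x (p + c * d) = pw op x p).
  { induction c as [|c IH]; intros p Hp.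
    - rewrite Nat.mul_0_l, Nat.add_0_r; auto.
    - replace (p + S c * d) with (i + (p + c * d - i) + d) by (unfold d; nia).
      replace (i + (p + c * d - i) + d) with (j + (p + c * d - i)) by (unfold d; lia).
      rewrite <- P1. replace (i + (p + c * d - i)) with (p + c * d) by lia. auto. }
  set (S0 := fun z => op z z = z).
  assert (A : fam (Inf (pw op x)) S0).
  { simpl. intro k. exists ((k + i + 1) * d - 1). split; [unfold d; nia|].
    unfold S0. rewrite pw_add by auto.
    set (n := (k + i + 1) * d - 1).
    replace (n + n + 1) with (n + (k + i + 1) * d) by (unfold n, d; nia).
    apply P2. unfold n, d; nia. }
  apply EQ in A. simpl in A. destruct A as [k Hk].
  exists (2 * k + 2).
  assert (H1 := Hk (2 * k + 1) ltac:(lia)). assert (H2 := Hk (2 * k + 2) ltac:(lia)).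
  unfold S0 in H1, H2.
  rewrite <- H2. rewrite pw_add by auto.
  replace (2 * k + 2 + (2 * k + 2) + 1) with ((2*k+1) + (2*k+1) + 1 + 1 + 1) by lia.
  rewrite <- (pw_add _ Ha x (2*k+1+(2*k+1)+1) 1), <- (pw_add _ Ha x (2*k+1) (2*k+1)), H1.
  rewrite pw_add by auto. f_equal; lia.
Qed.

Lemma band_L1 (X:Type) (op:X->X->X)
  (Ha : forall x y z, op x (op y z) = op (op x y) z) x u m :
  x = op u (op x x) -> pw op x m = pw op x (S m) -> op x x = x.
Proof.
  intros Hu Hm.
  assert (K : forall k, exists v, x = op v (pw op x (S k))).
  { induction k as [|k [v Hv]].
    - exists u. exact Hu.
    - exists (op v u).
      assert (E1 : pw op x (S k) = op x (pw op x k)).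
      { symmetry. apply pw_S_l; auto. }
      assert (E2 : pw op x (S k) = op u (pw op x (S (S k)))).
      { transitivity (op (op u (op x x)) (pw op x k)).
        - rewrite E1. f_equal. exact Hu.
        - rewrite <- Ha. f_equal. change (op x x) with (pw op x 1).
          rewrite pw_add by auto. f_equal; lia. }
      transitivity (op v (pw op x (S k))); [exact Hv|]. rewrite E2, Ha. reflexivity. }
  destruct (K m) as [v Hv].
  assert (E : pw op x (S (S m)) = pw op x (S m)).
  { change (pw op x (S (S m))) with (op (pw op x (S m)) x).
    change (pw op x (S m)) with (op (pw op x m) x) at 2. rewrite <- Hm. reflexivity. }
  symmetry. transitivity (op v (pw op x (S m))); [exact Hv|].
  rewrite <- E. change (pw op x (S (S m))) with (op (pw op x (S m)) x).
  rewrite Ha, <- Hv. reflexivity.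
Qed.

Lemma band_L2 (X:Type) (op:X->X->X)
  (Ha : forall x y z, op x (op y z) = op (op x y) z) x u m :
  x = op (op x x) u -> pw op x m = pw op x (S m) -> op x x = x.
Proof.
  intros Hu Hm.
  assert (K : forall k, exists v, x = op (pw op x (S k)) v).
  { induction k as [|k [v Hv]].
    - exists u. exact Hu.
    - exists (op u v).
      assert (E2 : pw op x (S k) = op (pw op x (S (S k))) u).
      { transitivity (op (pw op x k) (op (op x x) u)).
        - change (pw op x (S k)) with (op (pw op x k) x). f_equal. exact Hu.
        - rewrite Ha. f_equal. change (op x x) with (pw op x 1).
          rewrite pw_add by auto. f_equal; lia. }
      transitivity (op (pw op x (S k)) v); [exact Hv|]. rewrite E2, <- Ha. reflexivity. }
  destruct (K m) as [v Hv].
  assert (E : pw op x (S (S m)) = pw op x (S m)).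
  { change (pw op x (S (S m))) with (op (pw op x (S m)) x).
    change (pw op x (S m)) with (op (pw op x m) x) at 2. rewrite <- Hm. reflexivity. }
  assert (E3 : pw op x (S (S m)) = op x (pw op x (S m))).
  { symmetry. apply pw_S_l; auto. }
  symmetry. transitivity (op (pw op x (S m)) v); [exact Hv|].
  rewrite <- E, E3, <- Ha, <- Hv. reflexivity.
Qed.

Lemma prA2_mul_char (X:Type) (op:X->X->X) e f (G : upfam X) S :
  fam (umul op (prA2 e f) G) S <->
  fam G (fun b => S (op e b)) /\ fam G (fun b => S (op f b)).
Proof. rewrite umul_char. simpl. tauto. Qed.

Lemma subCl_powers (X:Type) (op:X->X->X)
  (Ha : forall x y z, op x (op y z) = op (op x y) z) x m :
  is_subClifford (umul op) -> pw op x m = pw op x (S m) -> op x x = x.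
Proof.
  intros HC Hm. destruct (HC (pr1 x)) as [C [Cx [Ccl [Cl _]]]].
  set (P := fun n => pr1 (pw op x n)).
  assert (PS : forall n, P (S n) = umul op (pr1 x) (P n)).
  { intro n. unfold P. rewrite pr1_mul, pw_S_l; auto. }
  assert (PC : forall n, C (P n)) by (induction n; [exact Cx | rewrite PS; auto]).
  assert (D : forall n, P n = P (S n) -> P 0 = P 1).
  { induction n as [|n IH]; intro H; auto. apply IH.
    rewrite (PS (S n)) in H. rewrite (PS n) in H at 1. eapply Cl; [apply Cx| apply PC | apply PC | exact H]. }
  assert (E : P 0 = P 1) by (apply (D m); unfold P; rewrite Hm; auto).
  unfold P in E. apply pr1_inj in E. simpl in E. auto.
Qed.

Definition C3b (X:Type) (op:X->X->X) :=
  is_subClifford (umul op) \/ is_regular (umul op).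

Lemma chain_idem (X:Type) (op:X->X->X)
  (Ha : forall x y z, op x (op y z) = op (op x y) z) :
  idempotents_commute (umul op) -> C3b op ->
  forall e f, op e e = e -> op f f = f -> op e f = e \/ op e f = f.
Proof.
  intros HI H3 e f He Hf.
  assert (Cef : op f e = op e f) by (symmetry; apply (idem_X_comm HI); auto).
  set (F := prA2 e f).
  set (T := fun z => z = e \/ z = f).
  assert (FT : fam F T) by (simpl; unfold T; auto).
  destruct H3 as [HC|HR].
  - destruct (HC F) as [C [CF [Ccl [Cl _]]]].
    assert (EQ : umul op F F = umul op F (umul op F F)).
    { apply upfam_ext; intro S. unfold F. rewrite !prA2_mul_char. simpl.
      assert (V1 : op e (op e e) = e) by (rewrite He; auto).
      assert (V2 : op e (op e f) = op e f) by (rewrite Ha, He; auto).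
      assert (V3 : op e (op f e) = op e f) by (rewrite Cef; auto).
      assert (V4 : op e (op f f) = op e f) by (rewrite Hf; auto).
      assert (V5 : op f (op e e) = op e f) by (rewrite He; auto).
      assert (V6 : op f (op e f) = op e f) by (rewrite <- Cef, Ha, Hf; auto).
      assert (V7 : op f (op f e) = op e f) by (rewrite Ha, Hf; auto).
      assert (V8 : op f (op f f) = f) by (rewrite Hf; auto).
      rewrite V1, V2, V3, V4, V5, V6, V7, V8, He, Hf, Cef. tauto. }
    assert (EF : F = umul op F F) by (eapply Cl; eauto).
    rewrite EF in FT. unfold F in FT. apply prA2_mul_char in FT. destruct FT as [FT _].
    simpl in FT. destruct FT as [_ FT]. exact FT.
  - destruct (HR F) as [G HG].
    rewrite <- HG in FT. rewrite umul_char in FT.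
    unfold F in FT. rewrite prA2_mul_char in FT. destruct FT as [FT _].
    apply up_ne in FT. destruct FT as [b [_ Hb]].
    destruct Hb as [Hb|Hb].
    + left. rewrite <- Hb at 1. rewrite <- Ha, Hf. exact Hb.
    + right. rewrite <- Hb at 1. rewrite (Ha e (op e b) f), (Ha e e b), He. exact Hb.
Qed.

Lemma band (X:Type) (op:X->X->X)
  (Ha : forall x y z, op x (op y z) = op (op x y) z) :
  idempotents_commute (umul op) -> C3b op -> forall x, op x x = x.
Proof.
  intros HI H3 x. destruct (pow_eventual Ha HI x) as [m Hm].
  destruct H3 as [HC|HR].
  - eapply subCl_powers; eauto.
  - destruct (HR (pr1 x)) as [G HG].
    assert (A : fam (pr1 x) (fun z => z = x)) by (simpl; auto).
    rewrite <- HG in A. rewrite umul_char in A. rewrite umul_char in A. simpl in A.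
    apply up_ne in A. destruct A as [b Hb].
    set (y := op (op b x) b).
    assert (Ee : op (op x b) (op x b) = op x b) by (rewrite Ha, Hb; auto).
    assert (Ef : op (op b x) (op b x) = op b x).
    { rewrite (Ha (op b x) b x), <- (Ha b x b), <- (Ha b (op x b) x), Hb. auto. }
    assert (HbR : forall R, op x (op b (op x R)) = op x R).
    { intro R. rewrite (Ha b x R), (Ha x (op b x) R), (Ha x b x), Hb. auto. }
    destruct (chain_idem Ha HI (or_intror HR) Ee Ef) as [C1|C1].
    + apply (band_L1 op Ha (op (op x b) b) m); auto.
      symmetry. rewrite Ha. rewrite <- (Ha (op x b) b x), C1, Hb. auto.
    + assert (C2 : op (op b x) (op x b) = op b x).
      { transitivity (op (op x b) (op b x)); [apply (idem_X_comm HI); auto|exact C1]. }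
      apply (band_L2 op Ha b m); auto.
      symmetry. transitivity (op x (op (op b x) (op x b))).
      { repeat rewrite <- Ha. rewrite HbR. reflexivity. }
      rewrite C2, Ha, Hb. auto.
Qed.

Lemma C3_semilat (X:Type) (op:X->X->X)
  (Ha : forall x y z, op x (op y z) = op (op x y) z) :
  idempotents_commute (umul op) -> C3b op ->
  is_semilattice op /\ (forall x y, op x y = x \/ op x y = y).
Proof.
  intros HI H3. pose proof (band Ha HI H3) as B.
  split; [split; [exact Ha| split; [|exact B]]|].
  - intros x y. apply (idem_X_comm HI); auto.
  - intros x y. apply (chain_idem Ha HI H3); auto.
Qed.

Definition lin_sl (X:Type) (op:X->X->X) :=
  (forall x y z, op x (op y z) = op (op x y) z) /\
  (forall x y, op x y = op y x) /\ (forall x, op x x = x) /\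
  (forall x y, op x y = x \/ op x y = y).

Definition le (X:Type) (op:X->X->X) a b := op a b = a.
Definition lt (X:Type) (op:X->X->X) a b := le op a b /\ a <> b.

Lemma le_trans (X:Type) (op:X->X->X) : lin_sl op ->
  forall a b c, le op a b -> le op b c -> le op a c.
Proof.
  intros [Ha _] a b c H1 H2. unfold le in *. rewrite <- H1, <- Ha, H2. auto.
Qed.

Lemma le_antisym (X:Type) (op:X->X->X) : lin_sl op ->
  forall a b, le op a b -> le op b a -> a = b.
Proof. intros [_ [Hc _]] a b H1 H2. unfold le in *. rewrite <- H1, Hc. auto. Qed.

Lemma le_total (X:Type) (op:X->X->X) : lin_sl op ->
  forall a b, le op a b \/ le op b a.
Proof.
  intros [_ [Hc [_ Hl]]] a b. unfold le. destruct (Hl a b) as [H|H]; auto.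
  right. rewrite Hc; auto.
Qed.

Lemma le_refl (X:Type) (op:X->X->X) : lin_sl op -> forall a, le op a a.
Proof. intros [_ [_ [Hi _]]] a. apply Hi. Qed.

Lemma not_lt_le (X:Type) (op:X->X->X) : lin_sl op ->
  forall a b, ~ lt op b a -> le op a b.
Proof.
  intros L a b H. destruct (le_total L a b) as [H1|H1]; auto.
  destruct (classic (b = a)) as [E|E]. - subst; apply le_refl; auto.
  - exfalso; apply H; split; auto.
Qed.

Lemma strict_seq (X:Type) (op:X->X->X) (L : lin_sl op) (s : nat -> X) :
  (forall n, lt op (s (S n)) (s n)) ->
  (forall n m, n <= m -> le op (s m) (s n)) /\ (forall n m, n < m -> s n <> s m).
Proof.
  intros H.
  assert (A : forall n m, n <= m -> le op (s m) (s n)).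
  { intros n m Hnm. induction Hnm. - apply le_refl; auto.
    - eapply le_trans; eauto. apply H. }
  split; auto. intros n m Hnm E.
  assert (B : le op (s m) (s (S n))) by (apply A; lia).
  rewrite <- E in B. destruct (H n) as [H1 H2].
  apply H2. apply (le_antisym L); auto.
Qed.

Lemma chain_finite (X:Type) (op:X->X->X) :
  lin_sl op -> idempotents_commute (umul op) -> finite_type X.
Proof.
  intros L HI. pose proof L as [Ha [Hc [Hi Hl]]].
  assert (NA : forall B : X -> Prop, (exists b, B b) ->
            exists b, B b /\ forall b', B b' -> le op b b').
  { intros B [b0 Hb0]. apply NNPP. intro NE.
    assert (Hg : forall b, exists b', B b -> B b' /\ lt op b' b).
    { intro b. destruct (classic (B b)) as [Bb|Bb]; [|exists b; tauto].
      apply NNPP; intro N. apply NE. exists b. split; auto. intros b' Bb'.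
      apply not_lt_le; auto. intro Hlt. apply N. exists b'. auto. }
    set (g := fun b => proj1_sig (constructive_indefinite_description _ (Hg b))).
    assert (Gs : forall b, B b -> B (g b) /\ lt op (g b) b).
    { intros b Bb. unfold g. destruct (constructive_indefinite_description _ (Hg b)); simpl; auto. }
    set (d := fun n => Nat.iter n g b0).
    assert (Bd : forall n, B (d n)) by (induction n; simpl; auto; apply Gs; auto).
    assert (Dd : forall n, lt op (d (S n)) (d n)) by (intro n; apply Gs; auto).
    destruct (strict_seq L d Dd) as [Le Inj].
    apply (Inf_neq Inj). apply (FrInf_eq HI). left. intro n. exists 0, n.
    intros m Hm. rewrite Nat.add_0_r, Hc. apply Le; auto. }
  assert (NB : forall B : X -> Prop, (exists b, B b) ->
            exists b, B b /\ forall b', B b' -> le op b' b).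
  { intros B [b0 Hb0]. apply NNPP. intro NE.
    assert (Hg : forall b, exists b', B b -> B b' /\ lt op b b').
    { intro b. destruct (classic (B b)) as [Bb|Bb]; [|exists b; tauto].
      apply NNPP; intro N. apply NE. exists b. split; auto. intros b' Bb'.
      apply not_lt_le; auto. intro Hlt. apply N. exists b'. auto. }
    set (g := fun b => proj1_sig (constructive_indefinite_description _ (Hg b))).
    assert (Gs : forall b, B b -> B (g b) /\ lt op b (g b)).
    { intros b Bb. unfold g. destruct (constructive_indefinite_description _ (Hg b)); simpl; auto. }
    set (d := fun n => Nat.iter n g b0).
    assert (Bd : forall n, B (d n)) by (induction n; simpl; auto; apply Gs; auto).
    assert (Up : forall n m, n <= m -> le op (d n) (d m)).
    { intros n m Hnm. induction Hnm. - apply le_refl; auto.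
      - eapply le_trans; eauto. apply Gs; auto. }
    assert (Inj : forall n m, n < m -> d n <> d m).
    { intros n m Hnm E. assert (B1 : le op (d (S n)) (d m)) by (apply Up; lia).
      rewrite <- E in B1. destruct (Gs (d n) (Bd n)) as [_ [H1 H2]].
      apply H2. apply (le_antisym L); auto. }
    apply (Inf_neq Inj). apply (FrInf_eq HI). right. intro n. exists n.
    intros m Hm. apply Up; auto. }
  set (fin := fun z => exists l, forall w, le op w z -> In w l).
  assert (AF : forall z, fin z).
  { apply NNPP. intro N. apply not_all_ex_not in N.
    destruct (NA (fun z => ~ fin z) N) as [b [Bb Bmin]].
    apply Bb.
    destruct (classic (exists w, lt op w b)) as [Ew|NEw].
    - destruct (NB (fun w => lt op w b) Ew) as [c [Lc Cmax]].
      assert (Fc : fin c).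
      { apply NNPP. intro Nc. specialize (Bmin c Nc). destruct Lc as [Lc1 Lc2].
        apply Lc2. apply (le_antisym L); auto. }
      destruct Fc as [l Hl']. exists (b :: l). intros w Hw.
      destruct (classic (w = b)) as [E|E]; [left; auto|right].
      apply Hl'. apply Cmax. split; auto.
    - exists (b :: nil). intros w Hw. left.
      apply NNPP. intro E. apply NEw. exists w. split; auto. }
  destruct (classic (exists x : X, True)) as [Ex|NEx].
  - destruct (NB (fun _ => True) Ex) as [M [_ HM]].
    destruct (AF M) as [l Hl']. exists l. intro x. apply Hl'. apply HM. auto.
  - exists nil. intro x. apply NEx. eauto.
Qed.

Lemma filter_len_mono (A:Type) (p q : A -> bool) (l : list A) :
  (forall w, p w = true -> q w = true) -> length (filter p l) <= length (filter q l).
Proof.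
  intro H. induction l as [|a t IH]; simpl; auto.
  destruct (p a) eqn:Ep. - rewrite (H a Ep). simpl. lia.
  - destruct (q a); simpl; lia.
Qed.

Lemma filter_len_strict (A:Type) (p q : A -> bool) (l : list A) z :
  (forall w, p w = true -> q w = true) -> In z l -> p z = false -> q z = true ->
  length (filter p l) < length (filter q l).
Proof.
  intros H Hz Pz Qz. induction l as [|a t IH]; simpl in *; [contradiction|].
  destruct Hz as [E|Hz].
  - subst a. rewrite Pz, Qz. simpl. pose proof (filter_len_mono p q t H). lia.
  - specialize (IH Hz). destruct (p a) eqn:Ep.
    + rewrite (H a Ep). simpl. lia.
    + destruct (q a); simpl; lia.
Qed.

Lemma filter_true (A:Type) (l : list A) : filter (fun _ => true) l = l.
Proof. induction l; simpl; congruence. Qed.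

Lemma chain_iso (X:Type) (op:X->X->X) :
  lin_sl op -> finite_type X -> exists n, iso_L op n.
Proof.
  intros L [l Hl]. pose proof L as [Ha [Hc [Hi Hlin]]].
  set (ed := fun x y : X => excluded_middle_informative (x = y)).
  set (l' := nodup ed l).
  assert (In' : forall x, In x l') by (intro x; unfold l'; apply nodup_In; auto).
  assert (ND : NoDup l') by (apply NoDup_nodup).
  set (ltb := fun w x => if excluded_middle_informative (lt op w x) then true else false).
  set (f := fun x => length (filter (fun w => ltb w x) l')).
  assert (ltbE : forall w x, ltb w x = true <-> lt op w x).
  { intros w x. unfold ltb. destruct (excluded_middle_informative (lt op w x)); split; auto; discriminate. }
  assert (ltbF : forall w x, ltb w x = false <-> ~ lt op w x).
  { intros w x. unfold ltb. destruct (excluded_middle_informative (lt op w x)); split; auto; try discriminate; tauto. }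
  assert (Mono : forall x y, le op x y -> f x <= f y).
  { intros x y Hxy. apply filter_len_mono. intros w Hw. apply ltbE. apply ltbE in Hw.
    destruct Hw as [H1 H2]. split. - eapply le_trans; eauto.
    - intro E. subst w. apply H2. apply (le_antisym L); auto. }
  assert (Strict : forall x y, lt op x y -> f x < f y).
  { intros x y [Hxy Nxy]. apply filter_len_strict with (z := x); auto.
    - intros w Hw. apply ltbE. apply ltbE in Hw.
      destruct Hw as [H1 H2]. split. + eapply le_trans; eauto.
      + intro E. subst w. apply H2. apply (le_antisym L); auto.
    - apply ltbF. intros [_ E]; auto.
    - apply ltbE. split; auto. }
  assert (Inj : forall x y, f x = f y -> x = y).
  { intros x y E. apply NNPP. intro N. destruct (le_total L x y) as [H|H].
    - pose proof (Strict x y (conj H N)). lia.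
    - assert (N' : y <> x) by auto. pose proof (Strict y x (conj H N')). lia. }
  exists (length l'). exists f. repeat split.
  - intro x. unfold f. rewrite <- (filter_true l') at 2.
    apply filter_len_strict with (z := x); auto. apply ltbF. intros [_ E]; auto.
  - exact Inj.
  - intros k Hk.
    assert (I1 : incl (map f l') (seq 0 (length l'))).
    { intros a Ha'. apply in_map_iff in Ha'. destruct Ha' as [x [Ex _]]. subst a.
      apply in_seq. split; [lia|]. simpl.
      unfold f. rewrite <- (filter_true l') at 2.
      apply filter_len_strict with (z := x); auto. apply ltbF. intros [_ E]; auto. }
    assert (I2 : incl (seq 0 (length l')) (map f l')).
    { apply NoDup_length_incl; [| |exact I1].
      - apply Injective_map_NoDup; [intros a b; apply Inj | exact ND].
      - rewrite length_map, length_seq. lia. }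
    assert (Hk' : In k (seq 0 (length l'))) by (apply in_seq; lia).
    apply I2 in Hk'. apply in_map_iff in Hk'. destruct Hk' as [x [Ex _]]. eauto.
  - intros x y. destruct (Hlin x y) as [E|E].
    + rewrite E. symmetry. apply Nat.min_l. apply Mono. exact E.
    + rewrite E. symmetry. apply Nat.min_r. apply Mono. unfold le. rewrite Hc. exact E.
Qed.

Lemma R_chain (X:Type) (op:X->X->X) : lin_sl op ->
  forall (S : X -> Prop) a a',
  (forall b, S (op a b) -> S (op a' b)) \/ (forall b, S (op a' b) -> S (op a b)).
Proof.
  intros L S a a'. pose proof L as [Ha [Hc [Hi Hl]]].
  assert (K : forall a a', op a a' = a ->
    (forall b, S (op a b) -> S (op a' b)) \/ (forall b, S (op a' b) -> S (op a b))).
  { clear a a'. intros a a' E. destruct (classic (S a)) as [Sa|Sa].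
    - right. intros b Hb. destruct (Hl a b) as [E1|E1]; rewrite E1; auto.
      assert (E2 : op a' b = b) by (transitivity (op a' (op a b)); [rewrite E1; auto|]; rewrite Ha, (Hc a' a), E, E1; auto).
      rewrite E2 in Hb. auto.
    - left. intros b Hb. destruct (Hl a b) as [E1|E1]; rewrite E1 in Hb; [contradiction|].
      assert (E2 : op a' b = b) by (transitivity (op a' (op a b)); [rewrite E1; auto|]; rewrite Ha, (Hc a' a), E, E1; auto).
      rewrite E2; auto. }
  destruct (Hl a a') as [E|E]; auto.
  rewrite Hc in E. destruct (K a' a E); auto.
Qed.

Lemma R_min (X:Type) (op:X->X->X) : lin_sl op ->
  forall (S : X -> Prop) (P : X -> Prop) (l : list X), (exists a, In a l /\ P a) ->
  exists p, P p /\ forall a, In a l -> P a -> forall b, S (op p b) -> S (op a b).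
Proof.
  intros L S P l. induction l as [|a0 t IH]; intros [a [Ia Pa]]; [destruct Ia|].
  destruct (classic (exists a, In a t /\ P a)) as [Et|NEt].
  - destruct (IH Et) as [p [Pp Hp]].
    destruct (classic (P a0)) as [P0|P0].
    + destruct (R_chain L S p a0) as [C|C].
      * exists p. split; auto. intros a' [E|I] Pa' b Hb; [subst; auto| eauto].
      * exists a0. split; auto. intros a' [E|I] Pa' b Hb; [subst; auto| eauto].
    + exists p. split; auto. intros a' [E|I] Pa' b Hb; [subst; contradiction| eauto].
  - destruct Ia as [E|Ia]; [|exfalso; apply NEt; eauto]. subst a0.
    exists a. split; auto. intros a' [E|I] Pa' b Hb; [subst; auto|].
    exfalso; apply NEt; eauto.
Qed.

Lemma umul_comm_fin (X:Type) (op:X->X->X) : lin_sl op -> finite_type X ->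
  forall F G : upfam X, umul op F G = umul op G F.
Proof.
  intros L [l Hl] .
  assert (One : forall F G S, fam (umul op F G) S -> fam (umul op G F) S).
  { intros F G S H. rewrite umul_char in *. pose proof L as [Ha [Hc _]].
    set (P := fun a => fam G (fun b => S (op a b))).
    destruct (up_ne _ _ H) as [a0 Pa0].
    destruct (R_min L S P l (ex_intro _ a0 (conj (Hl a0) Pa0))) as [p [Pp Hp]].
    eapply up_mono; [exact Pp|]. intros b Hb. cbv beta.
    eapply up_mono; [exact H|]. intros a Pa. rewrite Hc. apply (Hp a (Hl a) Pa); auto. }
  intros F G. apply upfam_ext; intro S; split; apply One.
Qed.

Lemma umul_idem_fin (X:Type) (op:X->X->X) : lin_sl op -> finite_type X ->
  forall F : upfam X, umul op F F = F.
Proof.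
  intros L [l Hl] F. pose proof L as [Ha [Hc [Hi Hlin]]].
  apply upfam_ext; intro S. rewrite umul_char. split; intro H.
  - set (P := fun a => fam F (fun b => S (op a b))).
    destruct (up_ne _ _ H) as [a0 Pa0].
    destruct (R_min L S P l (ex_intro _ a0 (conj (Hl a0) Pa0))) as [p [Pp Hp]].
    destruct (classic (exists a, P a /\ ~ S a)) as [[a [Pa Na]]|NE].
    + eapply up_mono; [exact Pp|]. intros b Hb. apply NNPP; intro Nb.
      specialize (Hp a (Hl a) Pa b Hb). destruct (Hlin a b) as [E|E]; rewrite E in Hp; auto.
    + eapply up_mono; [exact H|]. intros a Pa. apply NNPP; intro Na. apply NE; eauto.
  - eapply up_mono; [exact H|]. intros a Sa. eapply up_mono; [exact H|].
    intros b Sb. destruct (Hlin a b) as [E|E]; rewrite E; auto.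
Qed.

Lemma empty_up (X:Type) : upfamily (fun S : X -> Prop => False).
Proof. split; intros; contradiction. Qed.

Lemma fin_inj (A B : Type) (a0 : A) (f : A -> B) (L : list B) :
  (forall a, In (f a) L) -> (forall a a', f a = f a' -> a = a') -> finite_type A.
Proof.
  intros HL Hi.
  set (pick := fun b => epsilon (inhabits a0) (fun a => f a = b)).
  exists (map pick L). intro a. apply in_map_iff. exists (f a). split; auto.
  apply Hi. unfold pick. apply (epsilon_spec (inhabits a0) (fun a' => f a' = f a)). eauto.
Qed.

Fixpoint allb (n : nat) : list (list bool) :=
  match n with 0 => nil :: nil | S n => map (cons true) (allb n) ++ map (cons false) (allb n) end.

Lemma allb_In n bs : length bs = n -> In bs (allb n).
Proof.
  revert bs; induction n as [|n IH]; intros bs Hb.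
  - destruct bs; [left; auto| discriminate].
  - destruct bs as [|b bs]; [discriminate|]. simpl in Hb. simpl. apply in_or_app.
    destruct b; [left|right]; apply in_map; apply IH; lia.
Qed.

Fixpoint subseqs (A:Type) (L : list A) : list (list A) :=
  match L with nil => nil :: nil | a :: t => map (cons a) (subseqs t) ++ subseqs t end.

Lemma filter_subseqs (A:Type) (p : A -> bool) L : In (filter p L) (subseqs L).
Proof.
  induction L as [|a t IH]; simpl; auto. apply in_or_app.
  destruct (p a); [left; apply in_map|right]; auto.
Qed.

Lemma combine_map_In (X:Type) (g : X -> bool) (l : list X) x :
  In (x, true) (combine l (map g l)) <-> In x l /\ g x = true.
Proof.
  induction l as [|a t IH]; simpl; [tauto|]. rewrite IH. split.
  - intros [E|[I G]]; [inversion E; subst; auto| auto].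
  - intros [[E|I] G]; [subst; left; rewrite G; auto| right; auto].
Qed.

Lemma upfam_finite (X:Type) : finite_type X -> finite_type (upfam X).
Proof.
  intros [l Hl].
  set (bit := fun (S : X -> Prop) x => if excluded_middle_informative (S x) then true else false).
  set (bits := fun S => map (bit S) l).
  set (setof := fun (bs : list bool) x => In (x, true) (combine l bs)).
  assert (Key : forall S x, setof (bits S) x <-> S x).
  { intros S x. unfold setof, bits. rewrite combine_map_In. unfold bit.
    destruct (excluded_middle_informative (S x)); split; auto; try tauto.
    intros [_ E]; discriminate. }
  set (code := fun F : upfam X => filter (fun bs => if excluded_middle_informative (fam F (setof bs))
       then true else false) (allb (length l))).
  apply (fin_inj (Upfam (empty_up X)) code (subseqs (allb (length l)))).
  - intro F. apply filter_subseqs.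
  - intros F G E. apply upfam_ext. intro S.
    assert (Cm : forall H : upfam X, fam H S <-> In (bits S) (code H)).
    { intro H. rewrite (@up_iff X H S (setof (bits S)) (fun x => iff_sym (Key S x))).
      unfold code. rewrite filter_In.
      destruct (excluded_middle_informative (fam H (setof (bits S)))); split; try tauto.
      - intro; split; auto. apply allb_In. unfold bits. apply length_map.
      - intros [_ D]; discriminate. }
    rewrite !Cm, E. tauto.
Qed.


Lemma sl_inverse (T:Type) (m:T->T->T) : is_semilattice m -> is_inverse_semigroup m.
Proof.
  intros [Ha [Hc Hi]]. split; auto. intro x. exists x. split.
  - split; rewrite !Hi; auto.
  - intros y [H1 H2].
    assert (E1 : m (m x y) x = m x y) by (rewrite <- Ha, (Hc y x), Ha, Hi; auto).
    assert (E2 : m (m y x) y = m x y) by (rewrite <- Ha, (Hc x y), Ha, Hi, Hc; auto).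
    rewrite E1 in H1. rewrite E2 in H2. congruence.
Qed.

Unset Implicit Arguments.

Theorem theorem1p4 (X : Type) (op : X -> X -> X)
  (Hassoc : forall x y z, op x (op y z) = op (op x y) z) :
  let C1 := finite_type (upfam X) /\ is_semilattice (umul op) in
  let C2 := is_inverse_semigroup (umul op) in
  let C3 := idempotents_commute (umul op) /\
            (is_subClifford (umul op) \/ is_regular (umul op)) in
  let C4 := is_semilattice op /\ (forall x y, op x y = x \/ op x y = y) /\
            finite_type X /\ exists n : nat, iso_L op n in
  (C1 <-> C2) /\ (C2 <-> C3) /\ (C3 <-> C4).
Proof.
  cbv zeta.
  assert (h12 : finite_type (upfam X) /\ is_semilattice (umul op) -> is_inverse_semigroup (umul op)).
  { intros [_ H]. apply sl_inverse; auto. }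
  assert (h23 : is_inverse_semigroup (umul op) -> idempotents_commute (umul op) /\
            (is_subClifford (umul op) \/ is_regular (umul op))).
  { intro H. split; [apply inverse_idem_comm; auto|]. right. intro x.
    destruct H as [_ H]. destruct (H x) as [y [[h _] _]]. eauto. }
  assert (h34 : idempotents_commute (umul op) /\
            (is_subClifford (umul op) \/ is_regular (umul op)) ->
            is_semilattice op /\ (forall x y, op x y = x \/ op x y = y) /\
            finite_type X /\ exists n : nat, iso_L op n).
  { intros [HI H3]. destruct (C3_semilat Hassoc HI H3) as [SL LIN].
    assert (L : lin_sl op) by (destruct SL as [A [B C]]; repeat split; auto).
    pose proof (chain_finite L HI) as FIN.
    split; [exact SL|split; [exact LIN| split; [exact FIN| exact (chain_iso L FIN)]]]. }
  assert (h41 : is_semilattice op /\ (forall x y, op x y = x \/ op x y = y) /\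
            finite_type X /\ (exists n : nat, iso_L op n) ->
            finite_type (upfam X) /\ is_semilattice (umul op)).
  { intros [SL [LIN [FIN _]]].
    assert (L : lin_sl op) by (destruct SL as [A [B C]]; repeat split; auto).
    split; [apply upfam_finite; auto|].
    split; [apply umul_assoc; auto|]. split.
    - apply umul_comm_fin; auto.
    - apply umul_idem_fin; auto. }
  split; [split; [exact h12| intro H; exact (h41 (h34 (h23 H)))]|].
  split; split.
  - exact h23.
  - intro H; exact (h12 (h41 (h34 H))).
  - exact h34.
  - intro H; exact (h23 (h12 (h41 H))).
Qed.
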